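(* Let $(F,G)\in\mathcal H_{\mathbf d}[q\,;\,s]$ and $D=\max_i d_i$. For any $r>0$, $\mathcal U_{\mathbb S}\big(S(F,G),D^{-1/2}r\big)\subseteq\mathsf{Approx}(F,G,r)$.
   Context: $\mathcal H_{\mathbf d}[q\,;\,s]$: pairs $(F,G)$, $F=(f_1,\dots,f_q)$, $G=(g_1,\dots,g_s)$, of real homogeneous polynomials in $X_0,\dots,X_n$ of degrees $d_1,\dots,d_{q+s}$; each polynomial $h$ has the Weyl norm $\|h\|$ where $\|h\|^2=\sum_{|a|=d}\binom da^{-1}h_a^2$ ($h_a$ coefficients, $\binom da$ multinomial). $S(F,G)=\{x\in\mathbb S^n: f_i(x)=0\ \forall i,\ g_j(x)\geq0\ \forall j\}$. For $A\subseteq\mathbb S^n$, $\mathcal U_{\mathbb S}(A,r)=\{x\in\mathbb S^n: d_{\mathbb S}(x,A)<r\}$ with $d_{\mathbb S}$ the geodesic distance. $\mathsf{Approx}(F,G,r)=\{x\in\mathbb S^n:\ |f(x)|<\|f\|r\ \forall f\in F,\ g(x)>-\|g\|r\ \forall g\in G\}$. *)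

(* Defs.v *)
From Stdlib Require Import Reals.
From mathcomp Require Import all_boot all_algebra.
From mathcomp Require Import Rstruct.
From mathcomp Require Import mpoly.

Set Implicit Arguments.
Unset Strict Implicit.
Unset Printing Implicit Defensive.

Import GRing.Theory.
Local Open Scope ring_scope.

Definition point (n : nat) := 'I_n.+1 -> R.

Definition sphere (n : nat) (x : point n) : Prop :=
  (\sum_(i < n.+1) x i ^+ 2 = 1)%R.

Definition inner (n : nat) (x y : point n) : R := \sum_(i < n.+1) x i * y i.

Definition dS (n : nat) (x y : point n) : R := acos (inner x y).

(* U_S(A, r) = { x in S^n | d_S(x, A) < r },  d_S(x,A) = inf_{a in A} d_S(x,a).
   Since the infimum (+oo for empty A) is < r iff some a in A has d_S(x,a) < r,
   we unfold it to the existential. *)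
Definition U_S (n : nat) (A : point n -> Prop) (r : R) (x : point n) : Prop :=
  sphere x /\ exists a, A a /\ (dS x a < r)%R.

Definition multinomial (n : nat) (a : 'X_{1..n}) : nat :=
  ((mdeg a)`! %/ \prod_(i < n) (a i)`!)%N.

(* Weyl norm of a homogeneous polynomial h of degree d:
   ||h||^2 = sum_{|a| = d} binom(d,a)^{-1} h_a^2
   (the coefficients outside the support vanish, and for h d-homogeneous
    every monomial of the support has degree d). *)
Definition weyl_norm (n : nat) (h : {mpoly R[n]}) : R :=
  sqrt (\sum_(a <- msupp h) (h@_a) ^+ 2 / (multinomial a)%:R).

Definition SFG (n q s : nat) (F : 'I_q -> {mpoly R[n.+1]})
  (G : 'I_s -> {mpoly R[n.+1]}) (x : point n) : Prop :=
  sphere x /\ (forall i, (F i).@[x] = 0) /\ (forall j, (0 <= (G j).@[x])%R).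

Definition Approx (n q s : nat) (F : 'I_q -> {mpoly R[n.+1]})
  (G : 'I_s -> {mpoly R[n.+1]}) (r : R) (x : point n) : Prop :=
  sphere x /\
  (forall i, (Rabs ((F i).@[x]) < weyl_norm (F i) * r)%R) /\
  (forall j, ((G j).@[x] > - (weyl_norm (G j) * r))%R).

(* Main.v *)
Require Import Defs.
From Stdlib Require Import Reals.
From mathcomp Require Import all_boot all_order all_algebra.
From mathcomp Require Import Rstruct.
From mathcomp Require Import mpoly.
From Stdlib Require Import Lra Psatz.

Local Open Scope R_scope.
Lemma trig_bound (c : R) : 0 <= 1 + c -> 0 <= 1 - c -> (1 - c) + (1 - c) <= acos c * acos c.
Proof.
intros hc1 hc2.
assert (hc : -1 <= c <= 1) by lra.
assert (hcos : cos (acos c) = c) by (apply cos_acos; lra).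
destruct (acos_bound c) as [t0 tpi].
set (t := acos c) in *.
set (h := t / 2).
assert (ht : t = 2 * h) by (unfold h; field).
rewrite ht in hcos. rewrite cos_2a_sin in hcos.
assert (hs0 : 0 <= sin h).
{ apply sin_ge_0; unfold h; pose proof PI_RGT_0; lra. }
assert (hsh : sin h <= h).
{ destruct (Req_dec h 0) as [e|ne].
  - rewrite e sin_0; lra.
  - left; apply sin_lt_x; unfold h in *; lra. }
rewrite ht. nra.
Qed.

From mathcomp.algebra_tactics Require Import ring lra.

Set Implicit Arguments.
Unset Strict Implicit.
Unset Printing Implicit Defensive.
Import Order.TTheory GRing.Theory Num.Theory.
Local Open Scope ring_scope.

Section Comb.
Variable m : nat.

Fixpoint words (d : nat) : seq (seq 'I_m) :=
  if d is d'.+1 then [seq i :: w | i <- enum 'I_m, w <- words d'] else [:: [::]].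

Definition cnt (w : seq 'I_m) : 'X_{1..m} := [multinom count_mem i w | i < m].

Lemma cnt_nil : cnt [::] = 0%MM.
Proof. by apply/mnmP => j; rewrite !mnmE. Qed.

Lemma cnt_cons i w : cnt (i :: w) = (U_(i) + cnt w)%MM.
Proof. by apply/mnmP => j; rewrite mnmDE !mnmE. Qed.

Lemma sum_words (F : seq 'I_m -> R) d :
  \sum_(w <- words d.+1) F w = \sum_(i <- enum 'I_m) \sum_(w <- words d) F (i :: w).
Proof. by rewrite /= big_allpairs_dep. Qed.

Lemma prod_words (y : 'I_m -> R) d :
  \sum_(w <- words d) \prod_(k <- w) y k = (\sum_i y i) ^+ d.
Proof.
elim: d => [|d IH]; first by rewrite /= big_seq1 big_nil expr0.
rewrite sum_words exprS mulr_suml -big_enum /=.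
apply: eq_bigr => i _; rewrite -IH mulr_sumr; apply: eq_bigr => w _.
by rewrite big_cons.
Qed.

Lemma prod_cnt (y : 'I_m -> R) w :
  \prod_(k <- w) y k = \prod_i y i ^+ cnt w i.
Proof.
elim: w => [|i w IH].
  by rewrite big_nil cnt_nil big1 // => j _; rewrite mnm0E expr0.
rewrite big_cons IH cnt_cons.
under [RHS]eq_bigr => j _ do rewrite mnmDE exprD.
rewrite big_split /=; congr (_ * _).
rewrite (bigD1 i) //= mnm1E eqxx expr1 big1 ?mulr1 // => j /negPf ji.
by rewrite mnm1E eq_sym ji expr0.
Qed.

Definition Nn d (a : 'X_{1..m}) : nat := (\sum_(w <- words d) (cnt w == a))%N.


Lemma eq_addU i (b a : 'X_{1..m}) :
  ((U_(i) + b)%MM == a) = (0 < a i)%N && (b == (a - U_(i))%MM).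
Proof.
apply/eqP/andP.
  move=> <-; split; first by rewrite mnmDE mnm1E eqxx.
  by apply/eqP; rewrite addmC addmK.
case=> ha /eqP ->; rewrite addmC submK //.
by apply/mnm_lepP => j; rewrite mnm1E; case: eqP => [<-|].
Qed.

Lemma Nn_S d a : Nn d.+1 a =
  (\sum_(i < m) if (0 < a i)%N then Nn d (a - U_(i))%MM else 0)%N.
Proof.
rewrite /Nn /= big_allpairs_dep -big_enum /=; apply: eq_bigr => i _.
under eq_bigr => w _ do rewrite cnt_cons eq_addU.
by case: (0 < a i)%N => //=; rewrite big1.
Qed.

Lemma Nn_fact d a : mdeg a = d -> (Nn d a * \prod_(i < m) (a i)`! = d`!)%N.
Proof.
elim: d a => [|d IH] a ha.
  move/eqP: ha; rewrite mdeg_eq0 => /eqP ->.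
  rewrite /Nn /= big_seq1 cnt_nil eqxx big1 // => i _.
  by rewrite mnm0E.
rewrite Nn_S big_distrl /=.
rewrite (eq_bigr (fun i => d`! * a i)%N); last first.
  move=> i _; have [ai0|ai_pos] := posnP (a i); first by rewrite ai0 muln0.
  have hsub : mdeg (a - U_(i))%MM = d.
    have e : a = ((a - U_(i)) + U_(i))%MM.
      rewrite submK //; apply/mnm_lepP => j; rewrite mnm1E.
      by case: eqP => [<-|].
    by move: ha; rewrite {1}e mdegD mdeg1 addn1 => -[].
  rewrite -(IH _ hsub) -mulnA; congr (_ * _)%N.
  rewrite (bigD1 i) // [in RHS](bigD1 i) // mnmBE mnm1E eqxx.
  under [in RHS]eq_bigr => j ji do rewrite mnmBE mnm1E eq_sym (negPf ji) subn0.
  case: (a i) ai_pos => // k _; rewrite factS subn1 /=; ring.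
by rewrite factS -ha mdegE mulnC big_distrr.
Qed.

Lemma Nn_gt0 d a : mdeg a = d -> (0 < Nn d a)%N.
Proof.
move=> /Nn_fact e; have := fact_gt0 d; rewrite -e.
by case: (Nn d a).
Qed.

Lemma natNn d a : (Nn d a)%:R = \sum_(w <- words d | cnt w == a) (1 : R).
Proof.
rewrite /Nn natr_sum [RHS]big_mkcond /=; apply: eq_bigr => w _.
by case: (cnt w == a).
Qed.

Lemma sum_if_eq (T : eqType) (r : seq T) (c : T) (g : R) : uniq r ->
  \sum_(a <- r) (if c == a then g else 0) = if c \in r then g else 0.
Proof.
elim: r => [|a r IH] /=; first by rewrite big_nil.
case/andP => ar ur; rewrite big_cons IH // in_cons.
case: eqP => [->|_] /=; last by rewrite add0r.
by rewrite (negPf ar) addr0.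
Qed.

Lemma group_sum d (S : seq 'X_{1..m}) (g : 'X_{1..m} -> R) : uniq S ->
  \sum_(w <- words d | cnt w \in S) g (cnt w) = \sum_(a <- S) (Nn d a)%:R * g a.
Proof.
move=> uS.
transitivity (\sum_(a <- S) \sum_(w <- words d | cnt w == a) g (cnt w)).
  symmetry.
  under eq_bigr => a _ do rewrite big_mkcond.
  rewrite exchange_big /= [RHS]big_mkcond /=; apply: eq_bigr => w _.
  exact: sum_if_eq.
apply: eq_bigr => a _; rewrite natNn big_distrl /=.
by apply: eq_bigr => w /eqP ->; rewrite mul1r.
Qed.

Definition ucoef d (f : {mpoly R[m]}) (w : seq 'I_m) : R :=
  if cnt w \in msupp f then f@_(cnt w) / (Nn d (cnt w))%:R else 0.

Lemma eval_words d (f : {mpoly R[m]}) (x : 'I_m -> R) : f \is d.-homog ->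
  f.@[x] = \sum_(w <- words d) ucoef d f w * \prod_(k <- w) x k.
Proof.
move=> hf; rewrite mevalE.
transitivity (\sum_(a <- msupp f) (Nn d a)%:R *
   (f@_a / (Nn d a)%:R * \prod_i x i ^+ a i)).
  apply: eq_big_seq => a ha; have hd := dhomog_mf hf ha.
  have := Nn_gt0 hd => hp.
  field; by rewrite pnatr_eq0 -lt0n.
rewrite -(group_sum d (fun a => f@_a / (Nn d a)%:R * \prod_i x i ^+ a i))
  ?msupp_uniq // [LHS]big_mkcond /=.
apply: eq_bigr => w _; rewrite /ucoef (prod_cnt x w).
by case: ifP => _ //; rewrite mul0r.
Qed.

Lemma norm_words d (f : {mpoly R[m]}) : f \is d.-homog ->
  \sum_(w <- words d) ucoef d f w ^+ 2 =
  \sum_(a <- msupp f) f@_a ^+ 2 / (multinomial a)%:R.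
Proof.
move=> hf.
transitivity (\sum_(w <- words d | cnt w \in msupp f)
   (fun a => (f@_a / (Nn d a)%:R) ^+ 2) (cnt w)).
  rewrite [RHS]big_mkcond /=; apply: eq_bigr => w _; rewrite /ucoef.
  by case: ifP => //; rewrite expr0n.
rewrite (group_sum d (fun a => (f@_a / (Nn d a)%:R) ^+ 2)) ?msupp_uniq //; apply: eq_big_seq => a ha.
have hd := dhomog_mf hf ha.
have hp := Nn_gt0 hd.
have hP : (0 < \prod_(i < m) (a i)`!)%N.
  by have := fact_gt0 d; rewrite -(Nn_fact hd) muln_gt0 => /andP[].
rewrite /multinomial hd -(Nn_fact hd) mulnK //.
field; by rewrite pnatr_eq0 -lt0n.
Qed.

Lemma vsum_words d (x a : 'I_m -> R) :
  \sum_(w <- words d) (\prod_(k <- w) x k - \prod_(k <- w) a k) ^+ 2 =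
  (\sum_i x i * x i) ^+ d + (\sum_i a i * a i) ^+ d
    - 2 * (\sum_i x i * a i) ^+ d.
Proof.
rewrite -!prod_words mulr_sumr -big_split -sumrB /=.
by apply: eq_bigr => w _; rewrite !big_split /=; ring.
Qed.

End Comb.

Lemma cs_step (u v A B C : R) : 0 <= A -> 0 <= B -> C ^+ 2 <= A * B ->
  (u * v + C) ^+ 2 <= (u ^+ 2 + A) * (v ^+ 2 + B).
Proof.
move=> hA hB hC.
have key : 2 * C * u * v <= A * v ^+ 2 + B * u ^+ 2.
  have [A0|Apos] := eqVneq A 0.
    have C0 : C = 0 by move: hC; rewrite A0 mul0r => h; nra.
    rewrite C0 A0; nra.
  have hA' : 0 < A by rewrite lt_def Apos hA.
  have h1 := sqr_ge0 (A * v - C * u).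
  have h2 : 0 <= (A * B - C ^+ 2) * u ^+ 2.
    by apply: mulr_ge0; [rewrite subr_ge0 | exact: sqr_ge0].
  have h3 : 0 <= A * (A * v ^+ 2 + B * u ^+ 2 - 2 * C * u * v) by nra.
  rewrite -subr_ge0; by rewrite pmulr_rge0 in h3.
nra.
Qed.

Lemma cs_seq (T : Type) (s : seq T) (u v : T -> R) :
  (\sum_(w <- s) u w * v w) ^+ 2 <=
  (\sum_(w <- s) u w ^+ 2) * (\sum_(w <- s) v w ^+ 2).
Proof.
elim: s => [|w s IH]; first by rewrite !big_nil expr0n mul0r.
rewrite !big_cons; apply: cs_step => //; apply: sumr_ge0 => i _; exact: sqr_ge0.
Qed.

Lemma pow_bound (c : R) d : -1 <= c <= 1 -> -1 <= c ^+ d <= 1.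
Proof.
case/andP => h1 h2; elim: d => [|d /andP [IH1 IH2]]; first by rewrite expr0; apply/andP; split; lra.
rewrite exprS; apply/andP; split; nra.
Qed.

Lemma pow_bound2 (c : R) d : -1 <= c <= 1 -> 1 - c ^+ d <= d%:R * (1 - c).
Proof.
move=> hc; have /andP [h1 h2] := hc.
elim: d => [|d IH]; first by rewrite expr0 mul0r subrr.
have /andP [p1 p2] := pow_bound d hc.
rewrite exprS -natr1 mulrDl mul1r; nra.
Qed.

Lemma multinomial_Nn m d (a : 'X_{1..m}) : mdeg a = d -> multinomial a = Nn d a.
Proof.
move=> hd.
have hP : (0 < \prod_(i < m) (a i)`!)%N.
  by have := fact_gt0 d; rewrite -(Nn_fact hd) muln_gt0 => /andP[].
by rewrite /multinomial hd -(Nn_fact hd) mulnK.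
Qed.

Lemma key m d (f : {mpoly R[m]}) (x a : 'I_m -> R) : f \is d.-homog ->
  \sum_i x i ^+ 2 = 1 -> \sum_i a i ^+ 2 = 1 ->
  (f.@[x] - f.@[a]) ^+ 2 <=
  (\sum_(b <- msupp f) f@_b ^+ 2 / (multinomial b)%:R) *
     (2 - 2 * (\sum_i x i * a i) ^+ d).
Proof.
move=> hf hx ha.
rewrite (eval_words x hf) (eval_words a hf) -sumrB.
under eq_bigr do rewrite -mulrBr.
apply: le_trans (cs_seq _ _ _) _.
rewrite norm_words // vsum_words.
have hx' : \sum_i x i * x i = 1 by rewrite -hx; apply: eq_bigr => i _; rewrite expr2.
have ha' : \sum_i a i * a i = 1 by rewrite -ha; apply: eq_bigr => i _; rewrite expr2.
rewrite hx' ha' !expr1n le_eqVlt; apply/orP; left; apply/eqP; congr (_ * _).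
Qed.

Lemma diff_bound n d D (f : {mpoly R[n.+1]}) (x a : point n) (r : R) :
  f \is d.-homog -> f != 0 -> sphere x -> sphere a -> 0 < r ->
  (d <= D)%N -> (0 < D)%N ->
  dS x a < r / sqrt D%:R -> `|f.@[x] - f.@[a]| < weyl_norm f * r.
Proof.
move=> hf fnz hx ha hr hdD hD hda.
set W2 := \sum_(b <- msupp f) f@_b ^+ 2 / (multinomial b)%:R.
have hW2 : 0 < W2.
  have: msupp f != [::] by rewrite msupp_eq0.
  rewrite /W2; case e: (msupp f) => [|b s] // _.
  have bin : b \in msupp f by rewrite e mem_head.
  have t0 : 0 < f@_b ^+ 2 / (multinomial b)%:R.
    apply: divr_gt0.
      by rewrite lt_def sqrf_eq0 -mcoeff_msupp bin sqr_ge0.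
    rewrite ltr0n. rewrite (multinomial_Nn (dhomog_mf hf bin)). exact: Nn_gt0 (dhomog_mf hf bin).
  have S0 : 0 <= \sum_(b0 <- s) f@_b0 ^+ 2 / (multinomial b0)%:R.
    by apply: sumr_ge0 => i _; apply: divr_ge0; [exact: sqr_ge0 | exact: ler0n].
  rewrite big_cons; lra.
have hk := key hf hx ha.
set c := \sum_i x i * a i in hk.
have hc1 : 0 <= 1 + c.
  have E : \sum_i (x i + a i) ^+ 2 = \sum_i x i ^+ 2 + \sum_i a i ^+ 2 + 2 * c.
    by rewrite /c mulr_sumr -!big_split; apply: eq_bigr => i _ /=; ring.
  have : 0 <= \sum_i (x i + a i) ^+ 2 by apply: sumr_ge0 => i _; exact: sqr_ge0.
  rewrite E hx ha; lra.
have hc2 : 0 <= 1 - c.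
  have E : \sum_i (x i - a i) ^+ 2 = \sum_i x i ^+ 2 + \sum_i a i ^+ 2 - 2 * c.
    by rewrite /c mulr_sumr -big_split -sumrB; apply: eq_bigr => i _ /=; ring.
  have : 0 <= \sum_i (x i - a i) ^+ 2 by apply: sumr_ge0 => i _; exact: sqr_ge0.
  rewrite E hx ha; lra.
have htrig : (1 - c) + (1 - c) <= dS x a ^+ 2.
  rewrite /dS expr2; apply/RleP; apply: trig_bound; apply/RleP.
    exact: hc1.
  exact: hc2.
have hth0 : 0 <= dS x a by apply/RleP; rewrite /dS; case: (acos_bound (inner x a)).
have hsD : 0 < sqrt D%:R by apply/RltP; apply: sqrt_lt_R0; apply/RltP; rewrite ltr0n.
have hsD2 : sqrt D%:R * sqrt D%:R = D%:R by apply: sqrt_sqrt; apply/RleP; exact: ler0n.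
have hthD : dS x a * sqrt D%:R < r by rewrite -ltr_pdivlMr.
have hc : -1 <= c <= 1 by apply/andP; split; lra.
have hpb := pow_bound2 d hc.
have hdD' : d%:R <= D%:R :> R by rewrite ler_nat.
have hd0 : 0 <= d%:R :> R by exact: ler0n.
have s1 : 2 - 2 * c ^+ d <= d%:R * dS x a ^+ 2 by nra.
have s2 : d%:R * dS x a ^+ 2 < r ^+ 2.
  have p : 0 <= dS x a * sqrt D%:R by rewrite mulr_ge0 // ltW.
  have : dS x a ^+ 2 * D%:R < r ^+ 2 by rewrite -hsD2; nra.
  nra.
have q1 : W2 * (2 - 2 * c ^+ d) <= W2 * (d%:R * dS x a ^+ 2) by rewrite ler_pM2l.
have q2 : W2 * (d%:R * dS x a ^+ 2) < W2 * r ^+ 2 by rewrite ltr_pM2l.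
have s3 : (f.@[x] - f.@[a]) ^+ 2 < W2 * r ^+ 2 by move: hk; rewrite -/W2 => hk; lra.
have hw : weyl_norm f = sqrt W2 by [].
have hsW : 0 < sqrt W2 by apply/RltP; apply: sqrt_lt_R0; apply/RltP.
have hsW2 : sqrt W2 * sqrt W2 = W2 by apply: sqrt_sqrt; apply/RleP; exact: ltW.
have hy : 0 < sqrt W2 * r by rewrite mulr_gt0.
have hy2 : (sqrt W2 * r) ^+ 2 = W2 * r ^+ 2 by rewrite exprMn expr2 hsW2.
move: s3 hy hy2; rewrite hw; set y := sqrt W2 * r; set e := f.@[x] - f.@[a] => s3 hy hy2.
rewrite ltr_norml; apply/andP; split; nra.
Qed.

Theorem proposition4p17 (n q s : nat) (d : 'I_(q + s) -> nat)
  (F : 'I_q -> {mpoly R[n.+1]}) (G : 'I_s -> {mpoly R[n.+1]})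
  (hdpos : forall k, (0 < d k)%N)
  (hF : forall i, F i \is (d (lshift s i)).-homog)
  (hG : forall j, G j \is (d (rshift q j)).-homog)
  (hFnz : forall i, F i != 0) (hGnz : forall j, G j != 0)
  (r : R) (hr : 0 < r) :
  let D := (\max_(k < q + s) d k)%N in
  forall x : point n,
    U_S (SFG F G) (r / sqrt (D%:R)) x -> Approx F G r x.
Proof.
move=> D x [hx [a [[ha [hFa hGa]] hd]]].
have hle : forall k, (d k <= D)%N by move=> k; exact: leq_bigmax.
have hD : forall k : 'I_(q + s), (0 < D)%N.
  by move=> k; apply: leq_trans (hdpos k) (hle k).
split => //; split => [i|j].
  have := diff_bound (hF i) (hFnz i) hx ha hr (hle _) (hD (lshift s i)) hd.
  by rewrite hFa subr0.
have := diff_bound (hG j) (hGnz j) hx ha hr (hle _) (hD (rshift q j)) hd.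
rewrite ltr_norml => /andP [h1 _]; move: h1 (hGa j).
generalize (weyl_norm (G j) * r) ((G j).@[x]) ((G j).@[a]); clear => w u v h1 h2; lra.
Qed.
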